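(* Let $a,b,\alpha,\beta$ be constants with $\alpha>0$, $\beta>0$, $\alpha\neq\beta$, $a^2\alpha^2+b^2\beta^2=1$, and let $c(v)=(a\cos\alpha v,\ a\sin\alpha v,\ b\cos\beta v,\ b\sin\beta v)$, $v\in[0,2\pi)$ (an arc-length parameterized curve in $\mathbb R^4$ with constant curvatures). Put $$\varkappa=\sqrt{a^2\alpha^4+b^2\beta^4},\qquad \tau=\frac{ab\alpha\beta(\alpha^2-\beta^2)}{\varkappa},\qquad \sigma=\frac{\alpha\beta}{\varkappa},$$ $$n(v)=\tfrac1\varkappa(-a\alpha^2\cos\alpha v,-a\alpha^2\sin\alpha v,-b\beta^2\cos\beta v,-b\beta^2\sin\beta v),\quad b_1(v)=\tfrac1\varkappa(b\beta^2\cos\alpha v,b\beta^2\sin\alpha v,-a\alpha^2\cos\beta v,-a\alpha^2\sin\beta v)$$ (the second and fourth Frenet vectors of $c$). Let $A(u),B(u)$ be smooth functions on an interval $J$ with $A'^2+B'^2>0$ and $(\varkappa A-1)^2+(\tau A-\sigma B)^2>0$ on $J$, and consider the surface $$M^2: z(u,v)=c(v)+A(u)\,n(v)+B(u)\,b_1(v),\qquad u\in J,\ v\in[0,2\pi).$$ Then $M^2$ is minimal if and only if, on $J$, $$\frac{A''B'-A'B''}{A'^2+B'^2}=\frac{(\varkappa A-1)\varkappa B'+(\tau A-\sigma B)(\sigma A'+\tau B')}{(\varkappa A-1)^2+(\tau A-\sigma B)^2}.$$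
   Context: Minimal means that the mean curvature vector $H=\tfrac12(\sigma_{II}(x,x)+\sigma_{II}(y,y))$ vanishes, where $\sigma_{II}$ is the second fundamental form of the surface in $\mathbb R^4$ (with its standard Euclidean metric) and $x,y$ is an orthonormal tangent basis. *)

(* Defs.v *)
From Stdlib Require Import Reals.
Open Scope R_scope.

Record R4 := mkR4 { x1 : R; x2 : R; x3 : R; x4 : R }.

Definition vzero : R4 := mkR4 0 0 0 0.
Definition vadd (p q : R4) : R4 :=
  mkR4 (x1 p + x1 q) (x2 p + x2 q) (x3 p + x3 q) (x4 p + x4 q).
Definition vscale (k : R) (p : R4) : R4 :=
  mkR4 (k * x1 p) (k * x2 p) (k * x3 p) (k * x4 p).
Definition vsub (p q : R4) : R4 := vadd p (vscale (-1) q).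
Definition dot (p q : R4) : R :=
  x1 p * x1 q + x2 p * x2 q + x3 p * x3 q + x4 p * x4 q.

Definition has_pd_u (X Xu : R -> R -> R4) (u v : R) : Prop :=
  derivable_pt_lim (fun s => x1 (X s v)) u (x1 (Xu u v)) /\
  derivable_pt_lim (fun s => x2 (X s v)) u (x2 (Xu u v)) /\
  derivable_pt_lim (fun s => x3 (X s v)) u (x3 (Xu u v)) /\
  derivable_pt_lim (fun s => x4 (X s v)) u (x4 (Xu u v)).

Definition has_pd_v (X Xv : R -> R -> R4) (u v : R) : Prop :=
  derivable_pt_lim (fun s => x1 (X u s)) v (x1 (Xv u v)) /\
  derivable_pt_lim (fun s => x2 (X u s)) v (x2 (Xv u v)) /\
  derivable_pt_lim (fun s => x3 (X u s)) v (x3 (Xv u v)) /\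
  derivable_pt_lim (fun s => x4 (X u s)) v (x4 (Xv u v)).

Definition lin_indep (xu xv : R4) : Prop :=
  forall p q : R, vadd (vscale p xu) (vscale q xv) = vzero -> p = 0 /\ q = 0.

(* Orthonormal tangent basis x, y (Gram-Schmidt on X_u, X_v), given both as
   vectors in R^4 and by coordinates w.r.t. (X_u, X_v):
     x = e1x * X_u,   y = e2u * X_u + e2v * X_v. *)
Definition e1x (xu : R4) : R := / sqrt (dot xu xu).
Definition e1vec (xu : R4) : R4 := vscale (e1x xu) xu.
Definition w2vec (xu xv : R4) : R4 :=
  vsub xv (vscale (dot xv (e1vec xu)) (e1vec xu)).
Definition e2v (xu xv : R4) : R := / sqrt (dot (w2vec xu xv) (w2vec xu xv)).
Definition e2u (xu xv : R4) : R := - (dot xv (e1vec xu)) * e1x xu * e2v xu xv.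
Definition e2vec (xu xv : R4) : R4 := vscale (e2v xu xv) (w2vec xu xv).

Definition normal_part (xu xv w : R4) : R4 :=
  vsub (vsub w (vscale (dot w (e1vec xu)) (e1vec xu)))
       (vscale (dot w (e2vec xu xv)) (e2vec xu xv)).

(* Second fundamental form sigma_II(X, Y) for tangent vectors
   X = p X_u + q X_v, Y = r X_u + s X_v : normal part of the second
   derivative D_X Y = p r X_uu + (p s + q r) X_uv + q s X_vv. *)
Definition sff (xu xv xuu xuv xvv : R4) (p q r s : R) : R4 :=
  normal_part xu xv
    (vadd (vadd (vscale (p * r) xuu) (vscale (p * s + q * r) xuv))
          (vscale (q * s) xvv)).

Definition mean_curv (xu xv xuu xuv xvv : R4) : R4 :=
  vscale (1/2)
    (vadd (sff xu xv xuu xuv xvv (e1x xu) 0 (e1x xu) 0)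
          (sff xu xv xuu xuv xvv (e2u xu xv) (e2v xu xv)
                                 (e2u xu xv) (e2v xu xv))).

Definition minimal_on (X : R -> R -> R4) (U : R -> R -> Prop) : Prop :=
  exists Xu Xv Xuu Xuv Xvv : R -> R -> R4,
    forall u v, U u v ->
      has_pd_u X Xu u v /\ has_pd_v X Xv u v /\
      has_pd_u Xu Xuu u v /\ has_pd_v Xu Xuv u v /\ has_pd_v Xv Xvv u v /\
      lin_indep (Xu u v) (Xv u v) /\
      mean_curv (Xu u v) (Xv u v) (Xuu u v) (Xuv u v) (Xvv u v) = vzero.

Definition smooth_on (l r : R) (f : R -> R) (D : nat -> R -> R) : Prop :=
  (forall x, D 0%nat x = f x) /\
  (forall (k : nat) x, l < x < r -> derivable_pt_lim (D k) x (D (S k) x)).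

Definition kap (a b al be : R) : R :=
  sqrt (a ^ 2 * al ^ 4 + b ^ 2 * be ^ 4).
Definition tau_c (a b al be : R) : R :=
  a * b * al * be * (al ^ 2 - be ^ 2) / kap a b al be.
Definition sig_c (a b al be : R) : R := al * be / kap a b al be.

Definition curve_c (a b al be v : R) : R4 :=
  mkR4 (a * cos (al * v)) (a * sin (al * v)) (b * cos (be * v)) (b * sin (be * v)).

Definition frenet_n (a b al be v : R) : R4 :=
  vscale (/ kap a b al be)
    (mkR4 (- a * al ^ 2 * cos (al * v)) (- a * al ^ 2 * sin (al * v))
          (- b * be ^ 2 * cos (be * v)) (- b * be ^ 2 * sin (be * v))).

Definition frenet_b1 (a b al be v : R) : R4 :=
  vscale (/ kap a b al be)
    (mkR4 (b * be ^ 2 * cos (al * v)) (b * be ^ 2 * sin (al * v))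
          (- a * al ^ 2 * cos (be * v)) (- a * al ^ 2 * sin (be * v))).

Definition surf_z (a b al be : R) (A B : R -> R) (u v : R) : R4 :=
  vadd (vadd (curve_c a b al be v) (vscale (A u) (frenet_n a b al be v)))
       (vscale (B u) (frenet_b1 a b al be v)).

(* Main.v *)
Require Import Defs.
From Stdlib Require Import Reals Lra Nsatz FunctionalExtensionality.
Open Scope R_scope.

Definition Kk a b al be := kap a b al be.
Definition iK a b al be := / Kk a b al be.
Definition TT a b al be v := mkR4 (- a * al * sin (al * v)) (a * al * cos (al * v)) (- b * be * sin (be * v)) (b * be * cos (be * v)).
Definition NN a b al be v := frenet_n a b al be v.
Definition VV a b al be v := mkR4 (b * be * sin (al * v)) (- b * be * cos (al * v)) (- a * al * sin (be * v)) (a * al * cos (be * v)).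
Definition EE a b al be v := frenet_b1 a b al be v.

Definition fr a b al be v (c : R4) : R4 :=
  vadd (vadd (vadd (vscale (x1 c) (TT a b al be v)) (vscale (x2 c) (NN a b al be v)))
    (vscale (x3 c) (VV a b al be v))) (vscale (x4 c) (EE a b al be v)).

Definition frd a b al be (c : R4) : R4 :=
  mkR4 (- Kk a b al be * x2 c) (Kk a b al be * x1 c - tau_c a b al be * x3 c)
       (tau_c a b al be * x2 c - sig_c a b al be * x4 c) (sig_c a b al be * x3 c).

Lemma kap_facts a b al be : a ^ 2 * al ^ 2 + b ^ 2 * be ^ 2 = 1 -> 0 < al -> 0 < be ->
  Kk a b al be * Kk a b al be = a*a*al*al*al*al + b*b*be*be*be*be /\ iK a b al be * Kk a b al be = 1.
Proof.
  intros H h1 h2. unfold iK, Kk, kap.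
  assert (0 < a^2*al^4 + b^2*be^4).
  { assert (0 <= a^2) by (apply pow2_ge_0). assert (0 <= b^2) by (apply pow2_ge_0).
    assert (0 < al^2) by (apply pow_lt; lra). assert (0 < be^2) by (apply pow_lt; lra).
    replace (a^2*al^4 + b^2*be^4) with ((a^2*al^2)*al^2 + (b^2*be^2)*be^2) by ring.
    assert (0 <= a^2*al^2) by (apply Rmult_le_pos; lra).
    assert (0 <= b^2*be^2) by (apply Rmult_le_pos; lra).
    destruct (Rle_lt_dec (a^2*al^2) 0).
    - assert (0 < b^2*be^2) by lra.
      assert (0 < (b^2*be^2)*be^2) by (apply Rmult_lt_0_compat; lra).
      assert (0 <= (a^2*al^2)*al^2) by (apply Rmult_le_pos; lra). lra.
    - assert (0 < (a^2*al^2)*al^2) by (apply Rmult_lt_0_compat; lra).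
      assert (0 <= (b^2*be^2)*be^2) by (apply Rmult_le_pos; lra). lra. }
  split. rewrite sqrt_sqrt; [ring|lra]. apply Rinv_l. apply Rgt_not_eq, sqrt_lt_R0; lra.
Qed.

Ltac prep a b al be H h1 h2 :=
  let k1 := fresh "k1" in let k2 := fresh "k2" in let H' := fresh "H'" in
  destruct (kap_facts a b al be H h1 h2) as [k1 k2];
  assert (H' : a*a*al*al + b*b*be*be = 1) by (rewrite <- H; ring); clear H.

Ltac dottac :=
  intros H h1 h2; let a := match type of H with ?a ^ 2 * ?al ^ 2 + ?b ^ 2 * ?be ^ 2 = 1 => a end in
  let b := match type of H with ?a ^ 2 * ?al ^ 2 + ?b ^ 2 * ?be ^ 2 = 1 => b end in
  let al := match type of H with ?a ^ 2 * ?al ^ 2 + ?b ^ 2 * ?be ^ 2 = 1 => al end in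
  let be := match type of H with ?a ^ 2 * ?al ^ 2 + ?b ^ 2 * ?be ^ 2 = 1 => be end in
  prep a b al be H h1 h2;
  unfold dot, TT, VV, NN, EE, frenet_n, frenet_b1, vscale; simpl;
  fold (Kk a b al be); fold (iK a b al be);
  let v := match goal with |- context [sin (al * ?v)] => v end in
  pose proof (sin2_cos2 (al*v)); pose proof (sin2_cos2 (be*v)); unfold Rsqr in *;
  nsatz.

Lemma gTT a b al be v : a ^ 2 * al ^ 2 + b ^ 2 * be ^ 2 = 1 -> 0 < al -> 0 < be -> dot (TT a b al be v) (TT a b al be v) = 1. Proof. dottac. Qed.
Lemma gTN a b al be v : a ^ 2 * al ^ 2 + b ^ 2 * be ^ 2 = 1 -> 0 < al -> 0 < be -> dot (TT a b al be v) (NN a b al be v) = 0. Proof. dottac. Qed.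
Lemma gTV a b al be v : a ^ 2 * al ^ 2 + b ^ 2 * be ^ 2 = 1 -> 0 < al -> 0 < be -> dot (TT a b al be v) (VV a b al be v) = 0. Proof. dottac. Qed.
Lemma gTE a b al be v : a ^ 2 * al ^ 2 + b ^ 2 * be ^ 2 = 1 -> 0 < al -> 0 < be -> dot (TT a b al be v) (EE a b al be v) = 0. Proof. dottac. Qed.
Lemma gNN a b al be v : a ^ 2 * al ^ 2 + b ^ 2 * be ^ 2 = 1 -> 0 < al -> 0 < be -> dot (NN a b al be v) (NN a b al be v) = 1. Proof. dottac. Qed.
Lemma gNV a b al be v : a ^ 2 * al ^ 2 + b ^ 2 * be ^ 2 = 1 -> 0 < al -> 0 < be -> dot (NN a b al be v) (VV a b al be v) = 0. Proof. dottac. Qed.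
Lemma gNE a b al be v : a ^ 2 * al ^ 2 + b ^ 2 * be ^ 2 = 1 -> 0 < al -> 0 < be -> dot (NN a b al be v) (EE a b al be v) = 0. Proof. dottac. Qed.
Lemma gVV a b al be v : a ^ 2 * al ^ 2 + b ^ 2 * be ^ 2 = 1 -> 0 < al -> 0 < be -> dot (VV a b al be v) (VV a b al be v) = 1. Proof. dottac. Qed.
Lemma gVE a b al be v : a ^ 2 * al ^ 2 + b ^ 2 * be ^ 2 = 1 -> 0 < al -> 0 < be -> dot (VV a b al be v) (EE a b al be v) = 0. Proof. dottac. Qed.
Lemma gEE a b al be v : a ^ 2 * al ^ 2 + b ^ 2 * be ^ 2 = 1 -> 0 < al -> 0 < be -> dot (EE a b al be v) (EE a b al be v) = 1. Proof. dottac. Qed.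

Definition Hyp a b al be := a ^ 2 * al ^ 2 + b ^ 2 * be ^ 2 = 1 /\ 0 < al /\ 0 < be.

Lemma dot_comm p q : dot p q = dot q p.
Proof. unfold dot; ring. Qed.

Lemma fr_dot a b al be v c d : Hyp a b al be ->
  dot (fr a b al be v c) (fr a b al be v d) = dot c d.
Proof.
  intros [H [h1 h2]].
  set (T := TT a b al be v). set (N := NN a b al be v). set (V := VV a b al be v). set (E := EE a b al be v).
  transitivity (x1 c * x1 d * dot T T + x1 c * x2 d * dot T N + x1 c * x3 d * dot T V + x1 c * x4 d * dot T E
   + x2 c * x1 d * dot N T + x2 c * x2 d * dot N N + x2 c * x3 d * dot N V + x2 c * x4 d * dot N E
   + x3 c * x1 d * dot V T + x3 c * x2 d * dot V N + x3 c * x3 d * dot V V + x3 c * x4 d * dot V E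
   + x4 c * x1 d * dot E T + x4 c * x2 d * dot E N + x4 c * x3 d * dot E V + x4 c * x4 d * dot E E).
  { unfold fr, dot, vadd, vscale; simpl. fold T N V E. ring. }
  rewrite (dot_comm N T), (dot_comm V T), (dot_comm E T), (dot_comm V N), (dot_comm E N), (dot_comm E V).
  unfold T, N, V, E.
  rewrite gTT, gTN, gTV, gTE, gNN, gNV, gNE, gVV, gVE, gEE by auto.
  unfold dot; ring.
Qed.

Lemma fr_add a b al be v c d :
  vadd (fr a b al be v c) (fr a b al be v d) = fr a b al be v (vadd c d).
Proof. unfold fr, vadd, vscale; simpl. f_equal; ring. Qed.

Lemma fr_scale a b al be v k c :
  vscale k (fr a b al be v c) = fr a b al be v (vscale k c).
Proof. unfold fr, vadd, vscale; simpl. f_equal; ring. Qed.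

Lemma fr_zero a b al be v c : Hyp a b al be -> fr a b al be v c = vzero -> c = vzero.
Proof.
  intros Hy E. assert (dot c c = 0).
  { rewrite <- (fr_dot a b al be v c c Hy), E. unfold dot, vzero; simpl; ring. }
  destruct c as [c1 c2 c3 c4]; unfold dot in H; simpl in H. unfold vzero.
  assert (c1 = 0 /\ c2 = 0 /\ c3 = 0 /\ c4 = 0) as [-> [-> [-> ->]]] by (repeat split; nra).
  reflexivity.
Qed.

Lemma dlim_eq (f g : R -> R) x l l' : (forall s, f s = g s) -> derivable_pt_lim g x l -> l = l' ->
  derivable_pt_lim f x l'.
Proof.
  intros E D ->. replace f with g; auto. apply functional_extensionality; intros; rewrite E; auto.
Qed.

Lemma dsc p q w v : derivable_pt_lim (fun s => p * sin (w * s) + q * cos (w * s)) v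
  (p * (w * cos (w * v)) - q * (w * sin (w * v))).
Proof.
  assert (Hl : derivable_pt_lim (fun s => w * s) v w).
  { apply (dlim_eq _ (mult_real_fct w id) _ (w * 1)). intros; reflexivity.
    apply derivable_pt_lim_scal, derivable_pt_lim_id. ring. }
  apply (dlim_eq _ (fun s => p * sin (w * s) + (- q) * cos (w * s) * (-1)) _
     (p * (cos (w*v) * w) + (- q * ((- sin (w*v)) * w)) * (-1))).
  - intros; ring.
  - apply derivable_pt_lim_plus.
    + apply (dlim_eq _ (mult_real_fct p (comp sin (fun s => w * s))) _ (p * (cos (w*v) * w))).
      intros; reflexivity.
      apply derivable_pt_lim_scal. apply derivable_pt_lim_comp; auto. apply derivable_pt_lim_sin.
      reflexivity.
    + apply (dlim_eq _ (mult_real_fct (-1) (mult_real_fct (-q) (comp cos (fun s => w * s)))) _ ((-1) * (- q * ((- sin (w*v)) * w)))).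
      intros; unfold mult_real_fct, comp; ring.
      apply derivable_pt_lim_scal, derivable_pt_lim_scal. apply derivable_pt_lim_comp; auto. apply derivable_pt_lim_cos.
      ring.
  - ring.
Qed.

Ltac frenet_tac a b al be :=
  unfold Hyp; intros [H [h1 h2]]; prep a b al be H h1 h2;
  unfold fr, frd, tau_c, sig_c, TT, VV, NN, EE, frenet_n, frenet_b1, vadd, vscale; simpl;
  fold (Kk a b al be); unfold Rdiv; fold (iK a b al be); nsatz.

Lemma fren1 a b al be c v : Hyp a b al be ->
  derivable_pt_lim (fun s => x1 (fr a b al be s c)) v (x1 (fr a b al be v (frd a b al be c))).
Proof.
  intros Hy.
  eapply dlim_eq; [| apply (dsc (- x1 c * a * al + x3 c * b * be)
     (x2 c * iK a b al be * (- a * al^2) + x4 c * iK a b al be * (b * be^2)) al v) |].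
  - intros; unfold fr, TT, VV, NN, EE, frenet_n, frenet_b1, vadd, vscale; simpl; fold (Kk a b al be); fold (iK a b al be); ring.
  - revert Hy. frenet_tac a b al be.
Qed.

Lemma fren2 a b al be c v : Hyp a b al be ->
  derivable_pt_lim (fun s => x2 (fr a b al be s c)) v (x2 (fr a b al be v (frd a b al be c))).
Proof.
  intros Hy.
  eapply dlim_eq; [| apply (dsc (x2 c * iK a b al be * (- a * al^2) + x4 c * iK a b al be * (b * be^2))
     (x1 c * a * al - x3 c * b * be) al v) |].
  - intros; unfold fr, TT, VV, NN, EE, frenet_n, frenet_b1, vadd, vscale; simpl; fold (Kk a b al be); fold (iK a b al be); ring.
  - revert Hy. frenet_tac a b al be.
Qed.

Lemma fren3 a b al be c v : Hyp a b al be ->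
  derivable_pt_lim (fun s => x3 (fr a b al be s c)) v (x3 (fr a b al be v (frd a b al be c))).
Proof.
  intros Hy.
  eapply dlim_eq; [| apply (dsc (- x1 c * b * be - x3 c * a * al)
     (x2 c * iK a b al be * (- b * be^2) + x4 c * iK a b al be * (- a * al^2)) be v) |].
  - intros; unfold fr, TT, VV, NN, EE, frenet_n, frenet_b1, vadd, vscale; simpl; fold (Kk a b al be); fold (iK a b al be); ring.
  - revert Hy. frenet_tac a b al be.
Qed.

Lemma fren4 a b al be c v : Hyp a b al be ->
  derivable_pt_lim (fun s => x4 (fr a b al be s c)) v (x4 (fr a b al be v (frd a b al be c))).
Proof.
  intros Hy.
  eapply dlim_eq; [| apply (dsc (x2 c * iK a b al be * (- b * be^2) + x4 c * iK a b al be * (- a * al^2))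
     (x1 c * b * be + x3 c * a * al) be v) |].
  - intros; unfold fr, TT, VV, NN, EE, frenet_n, frenet_b1, vadd, vscale; simpl; fold (Kk a b al be); fold (iK a b al be); ring.
  - revert Hy. frenet_tac a b al be.
Qed.

Definition Zc a b al be (A B : R -> R) u :=
  mkR4 0 (A u - iK a b al be) 0 (B u + a * b * (be^2 - al^2) * iK a b al be).

Lemma surf_fr a b al be A B u v : Hyp a b al be ->
  surf_z a b al be A B u v = fr a b al be v (Zc a b al be A B u).
Proof.
  unfold Hyp; intros [H [h1 h2]]; prep a b al be H h1 h2.
  unfold surf_z, curve_c, Zc, fr, TT, VV, NN, EE, frenet_n, frenet_b1, vadd, vscale; simpl;
  fold (Kk a b al be); fold (iK a b al be). f_equal; nsatz.
Qed.

Section FrC.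
End FrC.

Lemma fr_sub a b al be v c d :
  vsub (fr a b al be v c) (fr a b al be v d) = fr a b al be v (vsub c d).
Proof. unfold vsub. rewrite fr_scale, fr_add. reflexivity. Qed.

Lemma fr_mean a b al be v xu xv xuu xuv xvv : Hyp a b al be ->
  mean_curv (fr a b al be v xu) (fr a b al be v xv) (fr a b al be v xuu) (fr a b al be v xuv) (fr a b al be v xvv)
  = fr a b al be v (mean_curv xu xv xuu xuv xvv).
Proof.
  intros Hy.
  assert (E1 : forall c, e1x (fr a b al be v c) = e1x c).
  { intros; unfold e1x; rewrite fr_dot; auto. }
  assert (E2 : forall c, e1vec (fr a b al be v c) = fr a b al be v (e1vec c)).
  { intros; unfold e1vec; rewrite E1, fr_scale; auto. }
  assert (E3 : forall c d, w2vec (fr a b al be v c) (fr a b al be v d) = fr a b al be v (w2vec c d)).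
  { intros; unfold w2vec; rewrite E2, fr_dot, fr_scale, fr_sub; auto. }
  assert (E4 : forall c d, e2v (fr a b al be v c) (fr a b al be v d) = e2v c d).
  { intros; unfold e2v; rewrite E3, fr_dot; auto. }
  assert (E5 : forall c d, e2u (fr a b al be v c) (fr a b al be v d) = e2u c d).
  { intros; unfold e2u; rewrite E4, E2, E1, fr_dot; auto. }
  assert (E6 : forall c d, e2vec (fr a b al be v c) (fr a b al be v d) = fr a b al be v (e2vec c d)).
  { intros; unfold e2vec; rewrite E4, E3, fr_scale; auto. }
  assert (E7 : forall c d w, normal_part (fr a b al be v c) (fr a b al be v d) (fr a b al be v w)
     = fr a b al be v (normal_part c d w)).
  { intros; unfold normal_part; rewrite E6, E2, !fr_dot, !fr_scale, !fr_sub; auto. }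
  assert (E8 : forall p q r s, sff (fr a b al be v xu) (fr a b al be v xv) (fr a b al be v xuu) (fr a b al be v xuv) (fr a b al be v xvv) p q r s
    = fr a b al be v (sff xu xv xuu xuv xvv p q r s)).
  { intros; unfold sff; rewrite !fr_scale, !fr_add, E7; auto. }
  unfold mean_curv. rewrite E1, E4, E5, !E8, fr_add, fr_scale. reflexivity.
Qed.
Lemma mk_eq a b c d a' b' c' d' : a = a' -> b = b' -> c = c' -> d = d' -> mkR4 a b c d = mkR4 a' b' c' d'.
Proof. intros -> -> -> ->; reflexivity. Qed.

Lemma vscale_mk k a b c d : vscale k (mkR4 a b c d) = mkR4 (k*a) (k*b) (k*c) (k*d).
Proof. reflexivity. Qed.
Lemma vadd_mk a b c d a' b' c' d' : vadd (mkR4 a b c d) (mkR4 a' b' c' d') = mkR4 (a+a') (b+b') (c+c') (d+d').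
Proof. reflexivity. Qed.
Lemma vsub_mk a b c d a' b' c' d' : vsub (mkR4 a b c d) (mkR4 a' b' c' d') = mkR4 (a+ -1*a') (b+ -1*b') (c+ -1*c') (d+ -1*d').
Proof. reflexivity. Qed.
Lemma dot_mk a b c d a' b' c' d' : dot (mkR4 a b c d) (mkR4 a' b' c' d') = a*a'+b*b'+c*c'+d*d'.
Proof. reflexivity. Qed.
Ltac mkrw := repeat (rewrite ?vscale_mk, ?vadd_mk, ?vsub_mk, ?dot_mk).

Lemma coef_mean p q P Q a1 a2 m c1 c2 : p*p+q*q > 0 -> P*P+Q*Q > 0 ->
  let i := / sqrt (p*p+q*q) in let j := / sqrt (P*P+Q*Q) in
  let W := (-q*a1 + p*a2)*(i*i) + (-q*c1 + p*c2)*(j*j) in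
  mean_curv (mkR4 0 p 0 q) (mkR4 P 0 Q 0) (mkR4 0 a1 0 a2) m (mkR4 0 c1 0 c2)
  = mkR4 0 (-q * W * (i*i) * (1/2)) 0 (p * W * (i*i) * (1/2)).
Proof.
  intros hE hG i j W. destruct m as [m1 m2 m3 m4].
  assert (hi : i * i * (p*p+q*q) = 1).
  { unfold i. rewrite <- Rinv_mult, sqrt_sqrt by lra. field. lra. }
  assert (hj : j * j * (P*P+Q*Q) = 1).
  { unfold j. rewrite <- Rinv_mult, sqrt_sqrt by lra. field. lra. }
  set (xu := mkR4 0 p 0 q). set (xv := mkR4 P 0 Q 0).
  assert (F1 : e1x xu = i). { unfold e1x, dot, xu; cbn [x1 x2 x3 x4]. replace (0*0+p*p+0*0+q*q) with (p*p+q*q) by ring; reflexivity. }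
  assert (F2 : e1vec xu = mkR4 0 (i*p) 0 (i*q)). { unfold e1vec, vscale; rewrite F1; unfold xu; cbn [x1 x2 x3 x4]; f_equal; ring. }
  assert (F3 : w2vec xu xv = xv). { unfold w2vec, vsub, vadd, vscale, dot; rewrite F2; unfold xv; cbn [x1 x2 x3 x4]; f_equal; ring. }
  assert (F4 : e2v xu xv = j). { unfold e2v; rewrite F3; unfold dot, xv; cbn [x1 x2 x3 x4]. replace (P*P+0*0+Q*Q+0*0) with (P*P+Q*Q) by ring; reflexivity. }
  assert (F5 : e2u xu xv = 0). { unfold e2u; rewrite F2; unfold dot, xv; cbn [x1 x2 x3 x4]; ring. }
  assert (F6 : e2vec xu xv = mkR4 (j*P) 0 (j*Q) 0). { unfold e2vec, vscale; rewrite F4, F3; unfold xv; cbn [x1 x2 x3 x4]; f_equal; ring. }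
  unfold mean_curv, sff, normal_part. rewrite F1, F2, F4, F5, F6.
  unfold W. clearbody i j. clear F1 F2 F3 F4 F5 F6.
  unfold xu, xv in *. clear xu xv. mkrw. apply mk_eq.
  - ring.
  - unfold Rdiv. rewrite Rmult_1_l. nsatz.
  - ring.
  - unfold Rdiv. rewrite Rmult_1_l. nsatz.
Qed.

Definition hasd4 (f : R -> R4) x (L : R4) : Prop :=
  derivable_pt_lim (fun s => x1 (f s)) x (x1 L) /\
  derivable_pt_lim (fun s => x2 (f s)) x (x2 L) /\
  derivable_pt_lim (fun s => x3 (f s)) x (x3 L) /\
  derivable_pt_lim (fun s => x4 (f s)) x (x4 L).

Lemma hasd4_ext f g x L : (forall s, f s = g s) -> hasd4 g x L -> hasd4 f x L.
Proof.
  intros E; replace f with g; auto. apply functional_extensionality; intros; rewrite E; auto.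
Qed.

Lemma uniq4 f x L1 L2 : hasd4 f x L1 -> hasd4 f x L2 -> L1 = L2.
Proof.
  intros [a1 [a2 [a3 a4]]] [b1 [b2 [b3 b4]]].
  destruct L1, L2; simpl in *. apply mk_eq; eapply uniqueness_limite; eauto.
Qed.

Lemma dlim_local (f g : R -> R) l r x L : (forall s, l < s < r -> f s = g s) -> l < x < r ->
  derivable_pt_lim g x L -> derivable_pt_lim f x L.
Proof.
  intros E hx D eps heps. destruct (D eps heps) as [d Hd].
  assert (hm : 0 < Rmin d (Rmin (x - l) (r - x))).
  { apply Rmin_pos. apply cond_pos. apply Rmin_pos; lra. }
  exists (mkposreal _ hm). intros h hh0 hh. simpl in hh.
  assert (h1 : Rabs h < d) by (eapply Rlt_le_trans; [exact hh| apply Rmin_l]).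
  assert (h2 : Rabs h < Rmin (x - l) (r - x)) by (eapply Rlt_le_trans; [exact hh| apply Rmin_r]).
  assert (h3 : Rabs h < x - l) by (eapply Rlt_le_trans; [exact h2| apply Rmin_l]).
  assert (h4 : Rabs h < r - x) by (eapply Rlt_le_trans; [exact h2| apply Rmin_r]).
  apply Rabs_def2 in h3. apply Rabs_def2 in h4.
  rewrite (E (x + h)) by lra. rewrite (E x) by lra. apply Hd; auto.
Qed.

Lemma hasd4_local f g l r x L : (forall s, l < s < r -> f s = g s) -> l < x < r ->
  hasd4 g x L -> hasd4 f x L.
Proof.
  intros E hx [d1 [d2 [d3 d4]]]; repeat split;
  (eapply dlim_local; [| exact hx |]; [| eassumption]); intros s hs; rewrite E; auto.
Qed.

Lemma dscal_r f x l k : derivable_pt_lim f x l -> derivable_pt_lim (fun s => f s * k) x (l * k).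
Proof.
  intros D. apply (dlim_eq _ (mult_real_fct k f) _ (k * l)). intros; unfold mult_real_fct; ring.
  apply derivable_pt_lim_scal; auto. ring.
Qed.

Lemma fren4d a b al be c v : Hyp a b al be ->
  hasd4 (fun s => fr a b al be s c) v (fr a b al be v (frd a b al be c)).
Proof. intros Hy; repeat split; [apply fren1|apply fren2|apply fren3|apply fren4]; auto. Qed.

Lemma coef4d a b al be v Z u Z' : hasd4 Z u Z' ->
  hasd4 (fun s => fr a b al be v (Z s)) u (fr a b al be v Z').
Proof.
  intros [d1 [d2 [d3 d4]]].
  unfold hasd4, fr, vadd, vscale; cbn [x1 x2 x3 x4];
  repeat split; repeat apply derivable_pt_lim_plus; apply dscal_r; auto.
Qed.

Lemma frdZ a b al be A B u : Hyp a b al be ->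
  frd a b al be (Zc a b al be A B u) =
  mkR4 (1 - kap a b al be * A u) 0 (tau_c a b al be * A u - sig_c a b al be * B u) 0.
Proof.
  unfold Hyp; intros [H [h1 h2]]; prep a b al be H h1 h2.
  unfold frd, Zc, tau_c, sig_c; cbn [x1 x2 x3 x4]. fold (Kk a b al be). unfold Rdiv. fold (iK a b al be).
  apply mk_eq; nsatz.
Qed.

Lemma frdPQ a b al be P Q :
  frd a b al be (mkR4 P 0 Q 0) = mkR4 0 (kap a b al be * P - tau_c a b al be * Q) 0 (sig_c a b al be * Q).
Proof. unfold frd, Kk; cbn [x1 x2 x3 x4]. apply mk_eq; ring. Qed.

Lemma sm_d l r f D k x : smooth_on l r f D -> l < x < r -> derivable_pt_lim (D k) x (D (S k) x).
Proof. intros [_ H] hx; apply H; auto. Qed.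

Lemma sm_f l r f D x : smooth_on l r f D -> l < x < r -> derivable_pt_lim f x (D 1%nat x).
Proof.
  intros [H0 H] hx. replace f with (D 0%nat). apply H; auto.
  apply functional_extensionality; auto.
Qed.

Theorem proposition7p6
  (a b al be : R) (Hal : 0 < al) (Hbe : 0 < be) (Hne : al <> be)
  (Hab : a ^ 2 * al ^ 2 + b ^ 2 * be ^ 2 = 1)
  (l r : R) (Hlr : l < r)
  (A B : R -> R) (DA DB : nat -> R -> R)
  (HA : smooth_on l r A DA) (HB : smooth_on l r B DB)
  (Hreg1 : forall u, l < u < r -> DA 1%nat u ^ 2 + DB 1%nat u ^ 2 > 0)
  (Hreg2 : forall u, l < u < r ->
     (kap a b al be * A u - 1) ^ 2
     + (tau_c a b al be * A u - sig_c a b al be * B u) ^ 2 > 0) :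
  minimal_on (surf_z a b al be A B) (fun u v => l < u < r)
  <->
  (forall u, l < u < r ->
     (DA 2%nat u * DB 1%nat u - DA 1%nat u * DB 2%nat u)
       / (DA 1%nat u ^ 2 + DB 1%nat u ^ 2)
     =
     ((kap a b al be * A u - 1) * kap a b al be * DB 1%nat u
      + (tau_c a b al be * A u - sig_c a b al be * B u)
        * (sig_c a b al be * DA 1%nat u + tau_c a b al be * DB 1%nat u))
     / ((kap a b al be * A u - 1) ^ 2
        + (tau_c a b al be * A u - sig_c a b al be * B u) ^ 2)).
Proof.
  assert (Hy : Hyp a b al be) by (repeat split; auto).
  pose (Xu := fun u v => fr a b al be v (mkR4 0 (DA 1%nat u) 0 (DB 1%nat u))).
  pose (Xv := fun u v => fr a b al be v (frd a b al be (Zc a b al be A B u))).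
  pose (Xuu := fun u v => fr a b al be v (mkR4 0 (DA 2%nat u) 0 (DB 2%nat u))).
  pose (Xuv := fun u v => fr a b al be v (frd a b al be (mkR4 0 (DA 1%nat u) 0 (DB 1%nat u)))).
  pose (Xvv := fun u v => fr a b al be v (frd a b al be (frd a b al be (Zc a b al be A B u)))).
  assert (D1 : forall u v, l < u < r -> has_pd_u (surf_z a b al be A B) Xu u v).
  { intros u v hu. change (hasd4 (fun s => surf_z a b al be A B s v) u (Xu u v)).
    apply hasd4_ext with (g := fun s => fr a b al be v (Zc a b al be A B s)).
    { intros; apply surf_fr; auto. }
    apply coef4d. unfold hasd4, Zc; cbn [x1 x2 x3 x4]; repeat split; try apply derivable_pt_lim_const.
    - eapply dlim_eq; [| apply derivable_pt_lim_minus; [apply (sm_f l r A DA u HA hu) | apply derivable_pt_lim_const] |].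
      intros; reflexivity. ring.
    - eapply dlim_eq; [| apply derivable_pt_lim_plus; [apply (sm_f l r B DB u HB hu) | apply derivable_pt_lim_const] |].
      intros; reflexivity. ring. }
  assert (D2 : forall u v, l < u < r -> has_pd_v (surf_z a b al be A B) Xv u v).
  { intros u v hu. change (hasd4 (fun s => surf_z a b al be A B u s) v (Xv u v)).
    apply hasd4_ext with (g := fun s => fr a b al be s (Zc a b al be A B u)).
    { intros; apply surf_fr; auto. }
    apply fren4d; auto. }
  assert (D3 : forall u v, l < u < r -> has_pd_u Xu Xuu u v).
  { intros u v hu. change (hasd4 (fun s => Xu s v) u (Xuu u v)). unfold Xu, Xuu.
    apply coef4d. unfold hasd4; cbn [x1 x2 x3 x4]; repeat split; try apply derivable_pt_lim_const.
    - apply (sm_d l r A DA 1 u HA hu).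
    - apply (sm_d l r B DB 1 u HB hu). }
  assert (D4 : forall u v, has_pd_v Xu Xuv u v).
  { intros u v. change (hasd4 (fun s => Xu u s) v (Xuv u v)). apply fren4d; auto. }
  assert (D5 : forall u v, has_pd_v Xv Xvv u v).
  { intros u v. change (hasd4 (fun s => Xv u s) v (Xvv u v)). apply fren4d; auto. }
  assert (key : forall u v, l < u < r ->
    (mean_curv (Xu u v) (Xv u v) (Xuu u v) (Xuv u v) (Xvv u v) = vzero <->
     (DA 2%nat u * DB 1%nat u - DA 1%nat u * DB 2%nat u)
       / (DA 1%nat u ^ 2 + DB 1%nat u ^ 2)
     =
     ((kap a b al be * A u - 1) * kap a b al be * DB 1%nat u
      + (tau_c a b al be * A u - sig_c a b al be * B u)
        * (sig_c a b al be * DA 1%nat u + tau_c a b al be * DB 1%nat u))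
     / ((kap a b al be * A u - 1) ^ 2
        + (tau_c a b al be * A u - sig_c a b al be * B u) ^ 2))).
  { intros u v hu. unfold Xu, Xv, Xuu, Xuv, Xvv. rewrite fr_mean by auto. rewrite frdZ by auto. rewrite frdPQ.
    pose proof (Hreg1 u hu) as R1. pose proof (Hreg2 u hu) as R2.
    set (p := DA 1%nat u) in *. set (q := DB 1%nat u) in *.
    set (a1 := DA 2%nat u) in *. set (a2 := DB 2%nat u) in *.
    set (K := kap a b al be) in *. set (tau := tau_c a b al be) in *. set (sig := sig_c a b al be) in *.
    set (P := 1 - K * A u). set (Q := tau * A u - sig * B u) in *.
    assert (hE : p*p+q*q > 0) by (replace (p*p+q*q) with (p^2+q^2) by ring; auto).
    assert (hG : P*P+Q*Q > 0) by (replace (P*P+Q*Q) with ((K * A u - 1)^2 + Q^2) by (unfold P; ring); auto).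
    pose proof (coef_mean p q P Q a1 a2 (frd a b al be (mkR4 0 p 0 q)) (K * P - tau * Q) (sig * Q) hE hG) as CM.
    cbv zeta in CM. rewrite CM. clear CM.
    set (i := / sqrt (p*p+q*q)). set (j := / sqrt (P*P+Q*Q)).
    assert (hi : i * i * (p*p+q*q) = 1).
    { unfold i. rewrite <- Rinv_mult, sqrt_sqrt by lra. field. lra. }
    assert (ei : / (p^2+q^2) = i*i).
    { unfold i. rewrite <- Rinv_mult, sqrt_sqrt by lra. f_equal; ring. }
    assert (ej : / ((K * A u - 1)^2 + Q^2) = j*j).
    { unfold j. rewrite <- Rinv_mult, sqrt_sqrt by lra. f_equal; unfold P; ring. }
    set (W := (- q * a1 + p * a2) * (i * i) + (- q * (K * P - tau * Q) + p * (sig * Q)) * (j * j)).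
    assert (eq : (a1 * q - p * a2) / (p ^ 2 + q ^ 2) -
       ((K * A u - 1) * K * q + Q * (sig * p + tau * q)) / ((K * A u - 1) ^ 2 + Q ^ 2) = - W).
    { unfold Rdiv. rewrite ei, ej. unfold W, P. ring. }
    split.
    - intros Hz. apply fr_zero in Hz; auto. injection Hz as z2 z4.
      assert (W * (i*i*(p*p+q*q)) * (1/2) = 0).
      { replace (W * (i*i*(p*p+q*q)) * (1/2)) with
          ((-q*W*(i*i)*(1/2))*(-q) + (p*W*(i*i)*(1/2))*p) by ring.
        rewrite z2, z4; ring. }
      rewrite hi in H. lra.
    - intros Hode. assert (W = 0) by lra. rewrite H.
      unfold fr, vadd, vscale, vzero; cbn [x1 x2 x3 x4]. apply mk_eq; ring. }
  split.
  - intros [Xu' [Xv' [Xuu' [Xuv' [Xvv' Hm]]]]] u hu.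
    destruct (Hm u 0 hu) as [h1 [h2 [h3 [h4 [h5 [_ h7]]]]]].
    assert (eu : forall s w, l < s < r -> Xu' s w = Xu s w).
    { intros s w hs. destruct (Hm s w hs) as [g1 _]. eapply uniq4; [exact g1| apply D1; auto]. }
    assert (ev : forall w, Xv' u w = Xv u w).
    { intros w. destruct (Hm u w hu) as [_ [g2 _]]. eapply uniq4; [exact g2| apply D2; auto]. }
    assert (e3 : Xuu' u 0 = Xuu u 0).
    { eapply uniq4; [exact h3|]. change (hasd4 (fun s => Xu' s 0) u (Xuu u 0)).
      eapply hasd4_local; [| exact hu | apply (D3 u 0 hu)]. intros; apply eu; auto. }
    assert (e4 : Xuv' u 0 = Xuv u 0).
    { eapply uniq4; [exact h4|]. change (hasd4 (fun s => Xu' u s) 0 (Xuv u 0)).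
      eapply hasd4_ext; [| apply (D4 u 0)]. intros; apply eu; auto. }
    assert (e5 : Xvv' u 0 = Xvv u 0).
    { eapply uniq4; [exact h5|]. change (hasd4 (fun s => Xv' u s) 0 (Xvv u 0)).
      eapply hasd4_ext; [| apply (D5 u 0)]. intros; apply ev; auto. }
    rewrite (eu u 0 hu), ev, e3, e4, e5 in h7. apply (key u 0 hu); auto.
  - intros Hode. exists Xu, Xv, Xuu, Xuv, Xvv. intros u v hu.
    split; [apply D1; auto|]. split; [apply D2; auto|]. split; [apply D3; auto|].
    split; [apply D4|]. split; [apply D5|]. split; [| apply (key u v hu); auto].
    intros s t Heq. unfold Xu, Xv in Heq. rewrite frdZ in Heq by auto.
    rewrite !fr_scale, fr_add in Heq. apply fr_zero in Heq; auto.
    rewrite !vscale_mk, vadd_mk in Heq. injection Heq as z1 z2 z3 z4.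
    pose proof (Hreg1 u hu) as R1. pose proof (Hreg2 u hu) as R2.
    set (p := DA 1%nat u) in *. set (q := DB 1%nat u) in *.
    set (P := 1 - kap a b al be * A u) in *. set (Q := tau_c a b al be * A u - sig_c a b al be * B u) in *.
    assert (s * (p*p+q*q) = 0).
    { replace (s * (p*p+q*q)) with ((s*p+t*0)*p + (s*q+t*0)*q) by ring. rewrite z2, z4. ring. }
    assert (t * (P*P+Q*Q) = 0).
    { replace (t * (P*P+Q*Q)) with ((s*0+t*P)*P + (s*0+t*Q)*Q) by ring. rewrite z1, z3. ring. }
    assert (p*p+q*q > 0) by (replace (p*p+q*q) with (p^2+q^2) by ring; auto).
    assert (P*P+Q*Q > 0) by (replace (P*P+Q*Q) with ((kap a b al be * A u - 1)^2 + Q^2) by (unfold P; ring); auto).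
    split.
    + apply Rmult_integral in H. destruct H; lra.
    + apply Rmult_integral in H0. destruct H0; lra.
Qed.
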